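(* Let $X,Y$ be infinite dimensional Banach lattices which are relatively $s$-decomposable for some $1\le s\le\infty$, and suppose $\ell_q$ is finitely lattice representable in $X_L$, where $1/q+1/s\le1$. Then for every $p\ge1$ with $1/p\ge1/q+1/s$, $Y$ satisfies an upper $p$-estimate and $M^{[p]}(Y)\le D_s(X,Y)$.
   Context: Banach lattices are real; disjoint means $|x|\wedge|y|=0$. $X,Y$ are relatively $s$-decomposable if there is $D$ with $\|\sum_{i=1}^n y_i\|_Y\le D(\sum_i(\|y_i\|_Y/\|x_i\|_X)^s)^{1/s}\|\sum_{i=1}^n x_i\|_X$ for all $n$ and all pairwise disjoint nonzero $x_i\in X$, pairwise disjoint nonzero $y_i\in Y$; $D_s(X,Y)$ is the infimum of such $D$. Upper $p$-estimate: $\|\sum y_i\|\le M(\sum\|y_i\|^p)^{1/p}$ for all finite families of pairwise disjoint elements; $M^{[p]}(Y)$ is the infimum of such $M$. $\ell_q$ is finitely lattice representable in a Banach lattice $Z$ if for every $n$ and $\varepsilon>0$ there are pairwise disjoint $z_1,\dots,z_n\in Z$ with $\|a\|_{\ell_q^n}\le\|\sum a_iz_i\|_Z\le(1+\varepsilon)\|a\|_{\ell_q^n}$ for all $a\in\mathbb R^n$. $\mathfrak B_n(X)$ is the set of $n$-tuples of pairwise disjoint norm-one elements of $X$; $\Phi_n(a):=\inf\{\|\sum_{i=1}^n a_ix_i\|_X:(x_i)\in\mathfrak B_n(X)\}$, $\|a\|_{X_L(n)}:=\inf\{\sum_{k\in F}\Phi_n(a^k): F\text{ finite}, a=\sum_{k\in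 F}a^k, a^k\in\mathbb R^n\}$, and $X_L$ is the Banach lattice (coordinate-wise order) of real sequences with $\|a\|_{X_L}:=\sup_n\|(a_i)_{i=1}^n\|_{X_L(n)}<\infty$. *)

(* Defs.v *)
From HB Require Import structures.
From mathcomp Require Import all_boot all_order all_algebra.
From mathcomp Require Import all_classical all_reals all_analysis.
Set Implicit Arguments. Unset Strict Implicit. Unset Printing Implicit Defensive.
Import Order.TTheory GRing.Theory Num.Theory numFieldNormedType.Exports.
Local Open Scope classical_set_scope.
Local Open Scope ring_scope.

Definition labs (R : realType) (V : completeNormedModType R)
  (join : V -> V -> V) (x : V) : V := join x (- x).

Definition lmeet (R : realType) (V : completeNormedModType R)
  (join : V -> V -> V) (x y : V) : V := - join (- x) (- y).

Definition is_banach_lattice (R : realType) (V : completeNormedModType R)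
  (le : V -> V -> Prop) (join : V -> V -> V) : Prop :=
  (forall x, le x x) /\
  (forall x y, le x y -> le y x -> x = y) /\
  (forall x y z, le x y -> le y z -> le x z) /\
  (forall x y z, le x y -> le (x + z) (y + z)) /\
  (forall x y (a : R), le x y -> 0 <= a -> le (a *: x) (a *: y)) /\
  (forall x y, le x (join x y) /\ le y (join x y)) /\
  (forall x y z, le x z -> le y z -> le (join x y) z) /\
  (forall x y, le (labs join x) (labs join y) -> `|x| <= `|y|).

Record banachLattice (R : realType) := BanachLattice {
  bl_car :> completeNormedModType R;
  bl_le : bl_car -> bl_car -> Prop;
  bl_join : bl_car -> bl_car -> bl_car;
  bl_ax : is_banach_lattice bl_le bl_join }.

Definition ldisjoint (R : realType) (X : banachLattice R) (x y : X) : Prop :=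
  lmeet (@bl_join R X) (labs (@bl_join R X) x) (labs (@bl_join R X) y) = 0.

Definition pairwise_disjoint (R : realType) (X : banachLattice R) (n : nat)
  (x : 'I_n -> X) : Prop :=
  forall i j : 'I_n, i != j -> ldisjoint (x i) (x j).

Definition infinite_dim (R : realType) (X : banachLattice R) : Prop :=
  forall n : nat, exists v : 'I_n -> X,
    forall a : 'I_n -> R, \sum_(i < n) a i *: v i = 0 -> forall i, a i = 0.

Definition lnorm (R : realType) (q : \bar R) (n : nat) (a : 'I_n -> R) : R :=
  match q with
  | r%:E => (\sum_(i < n) `|a i| `^ r) `^ r^-1
  | _ => \big[Num.max/0]_(i < n) `|a i|
  end.

Definition recip (R : realType) (q : \bar R) : R :=
  match q with
  | r%:E => r^-1
  | _ => 0
  end.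

Definition rel_decomp_const (R : realType) (X Y : banachLattice R)
  (s : \bar R) (D : R) : Prop :=
  forall (n : nat) (x : 'I_n -> X) (y : 'I_n -> Y),
    (forall i, x i != 0) -> (forall i, y i != 0) ->
    pairwise_disjoint x -> pairwise_disjoint y ->
    `|\sum_(i < n) y i| <= D * lnorm s (fun i => `|y i| / `|x i|) * `|\sum_(i < n) x i|.

Definition rel_decomposable (R : realType) (X Y : banachLattice R)
  (s : \bar R) : Prop := exists D : R, rel_decomp_const X Y s D.

Definition Ds (R : realType) (X Y : banachLattice R) (s : \bar R) : R :=
  inf [set D : R | rel_decomp_const X Y s D].

Definition upper_est_const (R : realType) (Y : banachLattice R)
  (p : \bar R) (M : R) : Prop :=
  forall (n : nat) (y : 'I_n -> Y), pairwise_disjoint y ->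
    `|\sum_(i < n) y i| <= M * lnorm p (fun i => `|y i|).

Definition upper_estimate (R : realType) (Y : banachLattice R) (p : \bar R) : Prop :=
  exists M : R, upper_est_const Y p M.

Definition Mp (R : realType) (Y : banachLattice R) (p : \bar R) : R :=
  inf [set M : R | upper_est_const Y p M].

Definition Bn (R : realType) (X : banachLattice R) (n : nat) : set ('I_n -> X) :=
  [set x | (forall i, `|x i| = 1) /\ pairwise_disjoint x].

Definition Phi (R : realType) (X : banachLattice R) (n : nat) (a : 'I_n -> R) : R :=
  inf [set `|\sum_(i < n) a i *: x i| | x in @Bn R X n].

Definition XLn (R : realType) (X : banachLattice R) (n : nat) (a : 'I_n -> R) : R :=
  inf [set \sum_(b <- F) Phi X b |
        F in [set F : seq ('I_n -> R) | forall i, \sum_(b <- F) b i = a i]].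

Definition XLnorm (R : realType) (X : banachLattice R) (a : nat -> R) : \bar R :=
  ereal_sup [set (XLn X (fun i : 'I_n => a (nat_of_ord i)))%:E | n in [set: nat]].

Definition inXL (R : realType) (X : banachLattice R) (a : nat -> R) : Prop :=
  (XLnorm X a < +oo)%E.

(* l_q finitely lattice representable in X_L (coordinatewise order, so
   |z|/\|w| = 0 means min(|z k|,|w k|) = 0 for every k) *)
Definition flr_in_XL (R : realType) (X : banachLattice R) (q : \bar R) : Prop :=
  forall (n : nat) (eps : R), 0 < eps ->
    exists z : 'I_n -> (nat -> R),
      [/\ (forall i, inXL X (z i)),
          (forall i j, i != j -> forall k, Num.min `|z i k| `|z j k| = 0) &
          (forall a : 'I_n -> R,
             let za := (fun k => \sum_(i < n) a i * z i k) in
             ((lnorm q a)%:E <= XLnorm X za)%E /\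
             (XLnorm X za <= ((1 + eps) * lnorm q a)%:E)%E)].

(* Main.v *)
Require Import Defs.
From mathcomp Require Import all_boot all_order all_algebra.
From mathcomp Require Import all_classical all_reals all_analysis.
From mathcomp Require Import ring lra.
Import Order.TTheory GRing.Theory Num.Theory.
Set Implicit Arguments. Unset Strict Implicit. Unset Printing Implicit Defensive.
Local Open Scope classical_set_scope.
Local Open Scope ring_scope.

Section Lat.
Variables (R : realType) (X : banachLattice R).
Local Notation le := (@bl_le R X).
Local Notation jn := (@bl_join R X).
Local Notation ab := (labs jn).
Local Notation mt := (lmeet jn).
Implicit Types x y z u v w : X.

Let ax := @bl_ax R X.
Lemma leR x : le x x. Proof. by case: ax => h _; apply: h. Qed.
Lemma leA x y : le x y -> le y x -> x = y. Proof. by case: ax => _ [h _]; apply: h. Qed.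
Lemma leT x y z : le x y -> le y z -> le x z. Proof. by case: ax => _ [] _ [h _]; apply: h. Qed.
Lemma leDr x y z : le x y -> le (x + z) (y + z). Proof. by case: ax => _ [] _ [] _ [h _]; apply: h. Qed.
Lemma leZ x y (a : R) : le x y -> 0 <= a -> le (a *: x) (a *: y).
Proof. by case: ax => _ [] _ [] _ [] _ [h _]; apply: h. Qed.
Lemma jnub x y : le x (jn x y) /\ le y (jn x y).
Proof. by case: ax => _ [] _ [] _ [] _ [] _ [h _]; apply: h. Qed.
Lemma jnl x y : le x (jn x y). Proof. by case: (jnub x y). Qed.
Lemma jnr x y : le y (jn x y). Proof. by case: (jnub x y). Qed.
Lemma jnlub x y z : le x z -> le y z -> le (jn x y) z.
Proof. by case: ax => _ [] _ [] _ [] _ [] _ [] _ [h _]; apply: h. Qed.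
Lemma nmono x y : le (ab x) (ab y) -> `|x| <= `|y|.
Proof. by case: ax => _ [] _ [] _ [] _ [] _ [] _ [] _ h; apply: h. Qed.

Lemma leDl x y z : le x y -> le (z + x) (z + y).
Proof. by rewrite ![z + _]addrC; apply: leDr. Qed.
Lemma leD x y z w : le x y -> le z w -> le (x + z) (y + w).
Proof. by move=> h1 h2; apply: leT (leDr _ h1) (leDl _ h2). Qed.
Lemma leN x y : le x y -> le (- y) (- x).
Proof.
move=> h; have := leDr (- x - y) h.
have e1 : x + (- x - y) = - y by rewrite addrA subrr add0r.
have e2 : y + (- x - y) = - x by rewrite addrCA subrr addr0.
by rewrite e1 e2.
Qed.
Lemma leNN x y : le (- y) (- x) -> le x y.
Proof. by move/leN; rewrite !opprK. Qed.

Lemma jnC x y : jn x y = jn y x.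
Proof. by apply: leA; apply: jnlub; [exact: jnr | exact: jnl | exact: jnr | exact: jnl]. Qed.

Lemma jnDr x y z : jn (x + z) (y + z) = jn x y + z.
Proof.
apply: leA; first by apply: jnlub; apply: leDr; [exact: jnl | exact: jnr].
have h : le (jn x y) (jn (x + z) (y + z) - z).
  apply: jnlub.
  - by have := leDr (- z) (jnl (x + z) (y + z)); rewrite addrK.
  - by have := leDr (- z) (jnr (x + z) (y + z)); rewrite addrK.
by have := leDr z h; rewrite subrK.
Qed.
Lemma jnDl x y z : jn (z + x) (z + y) = z + jn x y.
Proof. by rewrite ![z + _]addrC jnDr. Qed.

Lemma mtl x y : le (mt x y) x.
Proof. by apply: leNN; rewrite /lmeet opprK; apply: jnl. Qed.
Lemma mtr x y : le (mt x y) y.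
Proof. by apply: leNN; rewrite /lmeet opprK; apply: jnr. Qed.
Lemma mtglb x y z : le z x -> le z y -> le z (mt x y).
Proof.
move=> h1 h2; apply: leNN; rewrite /lmeet opprK.
by apply: jnlub; apply: leN.
Qed.
Lemma mtC x y : mt x y = mt y x. Proof. by rewrite /lmeet jnC. Qed.
Lemma mtDr x y z : mt (x + z) (y + z) = mt x y + z.
Proof. by rewrite /lmeet !opprD jnDr opprD opprK. Qed.
Lemma mt_id x y : le x y -> mt x y = x.
Proof. by move=> h; apply: leA; [apply: mtl | apply: mtglb => //; apply: leR]. Qed.
Lemma mt_monor x y z : le y z -> le (mt x y) (mt x z).
Proof. by move=> h; apply: mtglb; [apply: mtl | apply: leT (mtr _ _) h]. Qed.
Lemma mt_monol x y z : le y z -> le (mt y x) (mt z x).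
Proof. by move=> h; rewrite ![mt _ x]mtC; apply: mt_monor. Qed.

Lemma le_sub x y : le x y -> le 0 (y - x).
Proof. by move=> h; have := leDr (- x) h; rewrite subrr. Qed.

Lemma ab_ge0 x : le 0 (ab x).
Proof.
have h : le (x + - x) (ab x + ab x) by apply: leD; [apply: jnl | apply: jnr].
rewrite subrr in h; have := leZ h (_ : 0 <= 2^-1) => /(_ ltac:(by rewrite invr_ge0)).
have e : (2^-1 + 2^-1 : R) = 1 by lra.
by rewrite scaler0 scalerDr -scalerDl e scale1r.
Qed.

Lemma lex_ab x : le x (ab x). Proof. exact: jnl. Qed.
Lemma leNx_ab x : le (- x) (ab x). Proof. exact: jnr. Qed.

Lemma abN x : ab (- x) = ab x. Proof. by rewrite /labs opprK jnC. Qed.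

Lemma ab_tri x y : le (ab (x + y)) (ab x + ab y).
Proof.
apply: jnlub; first by apply: leD; apply: jnl.
by rewrite opprD; apply: leD; apply: jnr.
Qed.

Lemma jnZ (t : R) x y : 0 <= t -> jn (t *: x) (t *: y) = t *: jn x y.
Proof.
rewrite le_eqVlt => /predU1P[<-|t0].
  rewrite !scale0r; apply: leA; last exact: jnl.
  by apply: jnlub; apply: leR.
apply: leA; first by apply: jnlub; apply: leZ; rewrite ?ltW //; [exact: jnl | exact: jnr].
have h : le (jn x y) (t^-1 *: jn (t *: x) (t *: y)).
  apply: jnlub.
  - have := leZ (jnl (t *: x) (t *: y)) (_ : 0 <= t^-1) => /(_ ltac:(by rewrite invr_ge0 ltW)).
    by rewrite scalerA mulVf ?gt_eqF // scale1r.
  - have := leZ (jnr (t *: x) (t *: y)) (_ : 0 <= t^-1) => /(_ ltac:(by rewrite invr_ge0 ltW)).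
    by rewrite scalerA mulVf ?gt_eqF // scale1r.
have := leZ h (ltW t0); by rewrite scalerA divff ?gt_eqF // scale1r.
Qed.

Lemma abZ (t : R) x : ab (t *: x) = `|t| *: ab x.
Proof.
have [t0|t0] := leP 0 t.
  by rewrite ger0_norm // /labs -scalerN jnZ.
rewrite ltr0_norm // -[ab (t *: x)]abN -scaleNr /labs -scalerN jnZ //.
by rewrite oppr_ge0 ltW.
Qed.

Lemma ab0 : ab 0 = 0.
Proof. by have := abZ 0 0; rewrite scale0r normr0 scale0r. Qed.

Lemma mtZ (t : R) x y : 0 <= t -> mt (t *: x) (t *: y) = t *: mt x y.
Proof. by move=> t0; rewrite /lmeet -!scalerN jnZ // scalerN. Qed.

Lemma mt_ge0 x y : le 0 x -> le 0 y -> le 0 (mt x y).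
Proof. by move=> *; apply: mtglb. Qed.

Lemma le_subr x y : le 0 y -> le (x - y) x.
Proof. by move=> h; have := leDl x (leN h); rewrite oppr0 addr0. Qed.

Lemma mt_subadd a b c : le 0 a -> le 0 b -> le 0 c ->
  le (mt a (b + c)) (mt a b + mt a c).
Proof.
move=> a0 b0 c0; set w := mt a (b + c).
suff h : le (w - mt a b) (mt a c) by have := leDl (mt a b) h; rewrite addrCA subrr addr0.
apply: mtglb.
- apply: leT (mtl a (b + c)); apply: le_subr; exact: mt_ge0.
- rewrite /lmeet opprK -jnDl.
  apply: jnlub.
  + have := leDr (- a) (mtl a (b + c)); rewrite subrr -/w => h.
    exact: leT h c0.
  + have := leDr (- b) (mtr a (b + c)); rewrite -/w.
    by rewrite addrAC subrr add0r.
Qed.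

Definition dj u v := mt (ab u) (ab v) = 0.

Lemma djE u v : dj u v <-> ldisjoint u v. Proof. by []. Qed.

Lemma dj_sym u v : dj u v -> dj v u. Proof. by rewrite /dj mtC. Qed.

Lemma dj0 u : dj u 0.
Proof.
rewrite /dj ab0; apply: leA; first exact: mtr.
apply: mt_ge0; [exact: ab_ge0 | exact: leR].
Qed.

Lemma djD u v w : dj u v -> dj u w -> dj u (v + w).
Proof.
rewrite /dj => h1 h2; apply: leA; last by apply: mt_ge0; apply: ab_ge0.
apply: leT (mt_monor _ (ab_tri v w)) _.
by have := mt_subadd (ab_ge0 u) (ab_ge0 v) (ab_ge0 w); rewrite h1 h2 addr0.
Qed.

Lemma le_scale1 (k : R) a : le 0 a -> 1 <= k -> le a (k *: a).
Proof.
move=> a0 k1; have := leZ a0 (_ : 0 <= k - 1) => /(_ ltac:(by rewrite subr_ge0)).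
rewrite scaler0 scalerBl scale1r => h; have := leDr a h.
by rewrite add0r subrK.
Qed.

Lemma djZ (t : R) u v : dj u v -> dj (t *: u) v.
Proof.
rewrite /dj abZ => h; apply: leA; last by apply: mt_ge0; rewrite -?abZ; apply: ab_ge0.
set k := `|t| + 1.
have k1 : 1 <= k by rewrite /k lerDr.
have hu : le (`|t| *: ab u) (k *: ab u).
  have := leZ (ab_ge0 u) (_ : 0 <= k - `|t|) => /(_ ltac:(by rewrite /k addrAC subrr add0r)).
  rewrite scaler0 scalerBl => h0; have := leDr (`|t| *: ab u) h0.
  by rewrite add0r subrK.
apply: leT (mt_monol _ hu) _.
apply: leT (mt_monor _ (le_scale1 (ab_ge0 v) k1)) _.
rewrite mtZ ?h ?scaler0 ?(le_trans _ k1) //; exact: leR.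
Qed.

Lemma dj_le u v : dj u v -> le (ab u) (ab (u + v)).
Proof.
rewrite /dj => h.
have h1 : le (ab u) (ab (u + v) + ab v).
  apply: jnlub.
  - have := leD (lex_ab (u + v)) (leNx_ab v); by rewrite addrK.
  - have := leD (leNx_ab (u + v)) (lex_ab v); by rewrite opprD subrK.
rewrite -(mt_id h1).
apply: leT (mt_subadd (ab_ge0 u) (ab_ge0 _) (ab_ge0 v)) _.
rewrite h addr0; exact: mtr.
Qed.

Lemma dj_sum (I : Type) (r : seq I) (P : pred I) (f : I -> X) u :
  (forall i, P i -> dj u (f i)) -> dj u (\sum_(i <- r | P i) f i).
Proof.
move=> h; apply: (big_ind (dj u)); [exact: dj0 | exact: djD | exact: h].
Qed.

Lemma norm_sub_sum n (f : 'I_n -> X) (P : pred 'I_n) :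
  pairwise_disjoint f ->
  `|\sum_(i < n | P i) f i| <= `|\sum_(i < n) f i|.
Proof.
move=> hd; rewrite [X in _ <= `|X|](bigID P) /=; apply: nmono; apply: dj_le.
apply: dj_sum => k nPk; apply: dj_sym; apply: dj_sum => j Pj.
apply: hd.
by apply/eqP => ekj; move: nPk; rewrite ekj Pj.
Qed.

End Lat.
Section LN.
Variable R : realType.
Implicit Types (a b : R).

Lemma bigmax_ge0 n (f : 'I_n -> R) : 0 <= \big[Num.max/0]_(i < n) f i.
Proof. by elim/big_rec: _ => // i y _ hy; rewrite le_max hy orbT. Qed.

Lemma bigmax_ub_seq (I : eqType) (r : seq I) (F : I -> R) i :
  i \in r -> F i <= \big[Num.max/0]_(j <- r) F j.
Proof.
elim: r => // a r IH; rewrite inE big_cons => /predU1P[->|/IH h].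
  by rewrite le_max lexx.
by rewrite le_max h orbT.
Qed.

Lemma bigmax_ub n (f : 'I_n -> R) i : f i <= \big[Num.max/0]_(j < n) f j.
Proof. exact: bigmax_ub_seq (mem_index_enum i). Qed.

Lemma bigmax_le n (f : 'I_n -> R) B : 0 <= B -> (forall i, f i <= B) ->
  \big[Num.max/0]_(i < n) f i <= B.
Proof. by move=> B0 h; elim/big_rec: _ => // i y _ hy; rewrite ge_max h hy. Qed.

Lemma bigmax_scale n (f : 'I_n -> R) t : 0 <= t ->
  t * \big[Num.max/0]_(i < n) f i = \big[Num.max/0]_(i < n) (t * f i).
Proof.
move=> t0; elim/big_rec2: _ => [|i y1 y2 _ <-]; first by rewrite mulr0.
by rewrite maxr_pMr.
Qed.

Lemma powRK a r : 0 <= a -> r != 0 -> (a `^ r) `^ r^-1 = a.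
Proof. by move=> a0 r0; rewrite -powRrM mulfV // powRr1. Qed.
Lemma powRVK a r : 0 <= a -> r != 0 -> (a `^ r^-1) `^ r = a.
Proof. by move=> a0 r0; rewrite -powRrM mulVf // powRr1. Qed.

Lemma powR_le a b r : 0 <= r -> 0 <= a -> a <= b -> a `^ r <= b `^ r.
Proof.
move=> r0 a0 ab; apply: ge0_ler_powR => //; rewrite nnegrE //.
exact: le_trans ab.
Qed.

Lemma lnorm_finE r n (a : 'I_n -> R) :
  lnorm r%:E a = (\sum_(i < n) `|a i| `^ r) `^ r^-1.
Proof. by []. Qed.
Lemma lnorm_infE n (a : 'I_n -> R) :
  lnorm +oo%E a = \big[Num.max/0]_(i < n) `|a i|.
Proof. by []. Qed.

Lemma one_leNy : ~ (1 <= -oo :> \bar R)%E.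
Proof. by []. Qed.

Lemma lnorm_ge0 q n (a : 'I_n -> R) : 0 <= lnorm q a.
Proof.
case: q => [r| |]; first by rewrite lnorm_finE powR_ge0.
  by rewrite lnorm_infE bigmax_ge0.
exact: bigmax_ge0.
Qed.

Lemma lnorm_le q n (a b : 'I_n -> R) : (1 <= q)%E ->
  (forall i, `|a i| <= `|b i|) -> lnorm q a <= lnorm q b.
Proof.
case: q => [r| |] q1 h; last by have := one_leNy q1.
  rewrite !lnorm_finE; move: q1; rewrite lee_fin => r1.
  have r0 : 0 <= r by apply: le_trans r1.
  apply: powR_le; first by rewrite invr_ge0.
    by apply: sumr_ge0 => i _; exact: powR_ge0.
  by apply: ler_sum => i _; apply: powR_le.
rewrite !lnorm_infE; apply: bigmax_le; first exact: bigmax_ge0.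
by move=> i; apply: le_trans (h i) (bigmax_ub _ i).
Qed.

Lemma lnorm_scale q n (a : 'I_n -> R) t : 0 <= t -> (1 <= q)%E ->
  lnorm q (fun i => t * a i) = t * lnorm q a.
Proof.
move=> t0; case: q => [r| |] q1; last by have := one_leNy q1.
  rewrite !lnorm_finE; move: q1; rewrite lee_fin => r1.
  have r0 : r != 0 by rewrite gt_eqF // (lt_le_trans ltr01).
  have -> : \sum_(i < n) `|t * a i| `^ r = t `^ r * \sum_(i < n) `|a i| `^ r.
    by rewrite mulr_sumr; apply: eq_bigr => i _; rewrite normrM (ger0_norm t0) powRM.
  rewrite powRM ?powR_ge0 ?(powRK t0 r0) //.
  by apply: sumr_ge0 => i _; exact: powR_ge0.
rewrite !lnorm_infE bigmax_scale //; apply: eq_bigr => i _.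
by rewrite normrM (ger0_norm t0).
Qed.

Lemma lnorm_onehot q n (i : 'I_n) (c : R) : (1 <= q)%E ->
  lnorm q (fun j => if j == i then c else 0) = `|c|.
Proof.
case: q => [r| |] q1; last by have := one_leNy q1.
  rewrite !lnorm_finE; move: q1; rewrite lee_fin => r1.
  have r0 : r != 0 by rewrite gt_eqF // (lt_le_trans ltr01).
  rewrite (bigD1 i) //= eqxx big1 ?addr0 ?(powRK (normr_ge0 c) r0) //.
  by move=> j /negbTE ->; rewrite normr0 powR0.
rewrite !lnorm_infE; apply: le_anti; apply/andP; split.
  by apply: bigmax_le => // j; case: eqP; rewrite ?normr0.
by have := bigmax_ub (fun j : 'I_n => `|(if j == i then c else 0)|) i; rewrite eqxx.
Qed.

Lemma le_lnorm_fin n (a : 'I_n -> R) t i : 0 < t ->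
  `|a i| <= (\sum_(j < n) `|a j| `^ t) `^ t^-1.
Proof.
move=> t0; rewrite -{1}(@powRK `|a i| t (normr_ge0 _) (lt0r_neq0 t0)).
apply: powR_le; [by rewrite invr_ge0 ltW | exact: powR_ge0 |].
rewrite (bigD1 i) //= lerDl; apply: sumr_ge0 => j _; exact: powR_ge0.
Qed.

Lemma lnorm_exp_mono p q n (a : 'I_n -> R) : (1 <= p)%E -> (1 <= q)%E ->
  recip q <= recip p -> lnorm q a <= lnorm p a.
Proof.
move=> p1 q1; case: q q1 => [r| |] q1; last by have := one_leNy q1.
  case: p p1 => [t| |] p1; last by have := one_leNy p1.
    rewrite !lnorm_finE /recip => rt; move: q1 p1; rewrite !lee_fin => r1 t1.
    have t0 : 0 < t by apply: lt_le_trans t1.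
    have r0 : 0 < r by apply: lt_le_trans r1.
    have tr : t <= r by move: rt; rewrite lef_pV2 ?posrE.
    set A := (\sum_(j < n) `|a j| `^ t) `^ t^-1.
    have A0 : 0 <= A by exact: powR_ge0.
    have S0 : 0 <= \sum_(j < n) `|a j| `^ t by apply: sumr_ge0 => j _; exact: powR_ge0.
    have hA : A `^ t = \sum_(j < n) `|a j| `^ t by rewrite (powRVK S0 (lt0r_neq0 t0)).
    have e : t + (r - t) = r by rewrite addrCA subrr addr0.
    have key : \sum_(i < n) `|a i| `^ r <= A `^ r.
      have -> : A `^ r = A `^ t * A `^ (r - t).
        by rewrite -powRD e // (gt_eqF r0).
      rewrite hA mulr_suml; apply: ler_sum => i _.
      have -> : `|a i| `^ r = `|a i| `^ t * `|a i| `^ (r - t).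
        by rewrite -powRD e // (gt_eqF r0).
      apply: ler_wpM2l; first exact: powR_ge0.
      apply: powR_le; [by rewrite subr_ge0 | exact: normr_ge0 | exact: le_lnorm_fin].
    rewrite -(@powRK A r A0 (lt0r_neq0 r0)).
    apply: powR_le => //; first by rewrite invr_ge0 ltW.
    by apply: sumr_ge0 => j _; exact: powR_ge0.
  rewrite /recip => h; exfalso; move: h; apply/negP; rewrite -ltNge invr_gt0.
  by move: q1; rewrite lee_fin; apply: lt_le_trans.
case: p p1 => [t| |] p1 _; last by have := one_leNy p1.
  rewrite lnorm_finE lnorm_infE; apply: bigmax_le; first exact: powR_ge0.
  move=> i; apply: le_lnorm_fin; apply: lt_le_trans ltr01 _.
  by move: p1; rewrite lee_fin.
exact: lexx.
Qed.

End LN.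
Section G.
Variable R : realType.

Lemma lnorm_sub q n (A : {pred 'I_n}) (g : 'I_n -> R) : (1 <= q)%E ->
  lnorm q (fun j : 'I_#|A| => g (enum_val j)) <= lnorm q g.
Proof.
case: q => [r| |] q1; last by have := one_leNy q1.
  rewrite !lnorm_finE; move: q1; rewrite lee_fin => r1; have r0 : 0 <= r by apply: le_trans r1.
  apply: powR_le; first by rewrite invr_ge0.
    by apply: sumr_ge0 => i _; exact: powR_ge0.
  rewrite -(big_enum_val (A:=A) (fun i => `|g i| `^ r)) /=.
  rewrite [leRHS](bigID (mem A)) /= lerDl.
  by apply: sumr_ge0 => i _; exact: powR_ge0.
rewrite !lnorm_infE; apply: bigmax_le; first exact: bigmax_ge0.
by move=> j; apply: bigmax_ub.
Qed.

Lemma decompG (X Y : banachLattice R) s D n (x : 'I_n -> X) (y : 'I_n -> Y) :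
  (1 <= s)%E -> 0 <= D -> rel_decomp_const X Y s D ->
  pairwise_disjoint x -> pairwise_disjoint y -> (forall i, x i = 0 -> y i = 0) ->
  `|\sum_(i < n) y i| <= D * lnorm s (fun i => `|y i| / `|x i|) * `|\sum_(i < n) x i|.
Proof.
move=> s1 D0 hD dx dy hxy.
pose A := [pred i : 'I_n | y i != 0].
pose x' := fun j : 'I_#|A| => x (enum_val j).
pose y' := fun j : 'I_#|A| => y (enum_val j).
have ey : \sum_(i < n) y i = \sum_(j < #|A|) y' j.
  rewrite /y' -(big_enum_val (A:=A) y) [LHS](bigID (mem A)) /= [X in _ + X]big1 ?addr0 //.
  by move=> i; rewrite inE negbK => /eqP.
have ex : \sum_(j < #|A|) x' j = \sum_(i < n | i \in A) x i.
  by rewrite /x' -(big_enum_val (A:=A) x).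
have nz : forall j, y' j != 0 by move=> j; have := enum_valP j; rewrite inE.
have H := hD #|A| x' y'.
have H' := H (fun j => _) nz.
have {H H'} H : `|\sum_(j < #|A|) y' j| <=
     D * lnorm s (fun j => `|y' j| / `|x' j|) * `|\sum_(j < #|A|) x' j|.
  apply: H'.
  - move=> j; apply/eqP => /hxy /eqP; exact/negP/nz.
  - by move=> j k jk; apply: dx; rewrite (inj_eq enum_val_inj).
  - by move=> j k jk; apply: dy; rewrite (inj_eq enum_val_inj).
rewrite ey; apply: le_trans H _; rewrite ex.
apply: ler_pM; rewrite ?normr_ge0 //.
- by apply: mulr_ge0 => //; exact: lnorm_ge0.
- apply: ler_wpM2l => //.
  exact: (lnorm_sub A (fun i => `|y i| / `|x i|)).
- exact: norm_sub_sum.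
Qed.
End G.
Section XL.
Variables (R : realType) (X : banachLattice R).

Lemma Phi_lbound N (b : 'I_N -> R) :
  lbound [set `|\sum_(i < N) b i *: x i| | x in @Bn R X N] 0.
Proof. by move=> y0 [x _ <-]. Qed.

Lemma Phi_ge0 N (b : 'I_N -> R) : 0 <= Phi X b.
Proof.
rewrite /Phi; case: (pselect (exists x, @Bn R X N x)) => [[x hx]|nx].
  by apply: lb_le_inf; [exists `|\sum_(i < N) b i *: x i|; exists x | exact: Phi_lbound].
have -> : [set `|\sum_(i < N) b i *: x i| | x in @Bn R X N] = set0.
  by apply/seteqP; split => // y0 [x hx _]; apply: nx; exists x.
by rewrite inf0.
Qed.

Lemma Phi_lb N (b : 'I_N -> R) x : @Bn R X N x -> Phi X b <= `|\sum_(i < N) b i *: x i|.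
Proof.
move=> hx; apply: ge_inf; last by exists x.
by exists 0; exact: Phi_lbound.
Qed.

Lemma Phi_empty N (b : 'I_N -> R) : ~ (exists x, @Bn R X N x) -> Phi X b = 0.
Proof.
move=> nx; rewrite /Phi.
have -> : [set `|\sum_(i < N) b i *: x i| | x in @Bn R X N] = set0.
  by apply/seteqP; split => // y0 [x hx _]; apply: nx; exists x.
by rewrite inf0.
Qed.

Lemma Phi_approx N (b : 'I_N -> R) d : (exists x, @Bn R X N x) -> 0 < d ->
  exists x, @Bn R X N x /\ `|\sum_(i < N) b i *: x i| < Phi X b + d.
Proof.
move=> [x0 hx0] d0.
have := @inf_lt _ [set `|\sum_(i < N) b i *: x i| | x in @Bn R X N] (Phi X b + d).
case.
- by exists `|\sum_(i < N) b i *: x0 i|; exists x0.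
- by rewrite /Phi ltrDl.
by move=> y0 [x hx <-] h; exists x.
Qed.

Definition decomp N (v : 'I_N -> R) (F : seq ('I_N -> R)) :=
  forall i, \sum_(b <- F) b i = v i.

Lemma XLn_lbound N (v : 'I_N -> R) :
  lbound [set \sum_(b <- F) Phi X b |
        F in [set F : seq ('I_N -> R) | forall i, \sum_(b <- F) b i = v i]] 0.
Proof. by move=> y0 [F _ <-]; apply: sumr_ge0 => b _; exact: Phi_ge0. Qed.

Lemma XLn_ne N (v : 'I_N -> R) :
  [set \sum_(b <- F) Phi X b |
        F in [set F : seq ('I_N -> R) | forall i, \sum_(b <- F) b i = v i]] !=set0.
Proof. by exists (\sum_(b <- [:: v]) Phi X b); exists [:: v] => // i; rewrite big_seq1. Qed.

Lemma XLn_ge0 N (v : 'I_N -> R) : 0 <= XLn X v.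
Proof. by apply: lb_le_inf; [exact: XLn_ne | exact: XLn_lbound]. Qed.

Lemma XLn_lb N (v : 'I_N -> R) F : decomp v F -> XLn X v <= \sum_(b <- F) Phi X b.
Proof.
move=> hF; apply: ge_inf; last by exists F.
by exists 0; exact: XLn_lbound.
Qed.

Lemma XLn_approx N (v : 'I_N -> R) d : 0 < d ->
  exists F, decomp v F /\ \sum_(b <- F) Phi X b < XLn X v + d.
Proof.
move=> d0; have := @inf_lt _ _ (XLn X v + d) (XLn_ne v).
case; first by rewrite /XLn ltrDl.
by move=> y0 [F hF <-] h; exists F.
Qed.

Lemma XLn_empty N (v : 'I_N -> R) : ~ (exists x, @Bn R X N x) -> XLn X v = 0.
Proof.
move=> nx; apply: le_anti; rewrite XLn_ge0 andbT.
have := @XLn_lb N v [:: v] _; rewrite big_seq1 Phi_empty //; apply.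
by move=> i; rewrite big_seq1.
Qed.

Lemma XLnorm_ub (a : nat -> R) N : ((XLn X (fun i : 'I_N => a i))%:E <= XLnorm X a)%E.
Proof. by apply: ereal_sup_ubound; exists N. Qed.

Lemma XLnorm_gt (a : nat -> R) (l : R) : (l%:E < XLnorm X a)%E ->
  exists N, l < XLn X (fun i : 'I_N => a i).
Proof.
move=> /ereal_sup_gt[_ [N _ <-]]; rewrite lte_fin => h; by exists N.
Qed.

Lemma Bn_restr N N' (h : (N' <= N)%N) x : @Bn R X N x ->
  @Bn R X N' (fun j => x (widen_ord h j)).
Proof.
case=> h1 h2; split => // i j ij; apply: h2.
by move: ij; apply: contra => /eqP/(congr1 val) /= /eqP.
Qed.

Lemma Phi_mono N N' (h : (N' <= N)%N) (b : 'I_N -> R) :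
  (exists x, @Bn R X N x) ->
  Phi X (fun j => b (widen_ord h j)) <= Phi X b.
Proof.
move=> ne; apply: lb_le_inf.
  by case: ne => x hx; exists `|\sum_(i < N) b i *: x i|; exists x.
move=> y0 [x hx <-].
apply: le_trans (Phi_lb _ (Bn_restr h hx)) _.
rewrite -(big_ord_narrow (F:=fun i => b i *: x i) h).
apply: (@norm_sub_sum R X N (fun i => b i *: x i) (fun i => (i < N')%N)).
by move=> i j ij; apply: djZ; apply: dj_sym; apply: djZ; apply: dj_sym; apply hx.2.
Qed.

End XL.
Section Num5.
Variable R : realType.

Lemma closureK (a b K : R) : 0 <= K ->
  (forall e, 0 < e -> e <= 2^-1 -> a <= b + e * K) -> a <= b.
Proof.
move=> K0 h; apply/ler_addgt0Pr => d d0.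
set e := Num.min (2^-1) (d / (K + 1)).
have K1 : 0 < K + 1 by apply: ltr_wpDl.
have e0 : 0 < e by rewrite lt_min invr_gt0 ltr0n divr_gt0.
have e2 : e <= 2^-1 by rewrite ge_min lexx.
apply: le_trans (h e e0 e2) _; rewrite lerD2l.
have : e <= d / (K + 1) by rewrite ge_min lexx orbT.
move=> hed; apply: le_trans (ler_wpM2r K0 hed) _.
rewrite mulrAC ler_pdivrMr // ler_pM2l //; lra.
Qed.

Lemma num_bound (e : R) : 0 < e -> e <= 2^-1 -> (1 - e)^-1 * (1 + 2 * e) <= 1 + 6 * e.
Proof.
move=> e0 e2; have h1 : 0 < 1 - e by lra.
rewrite mulrC -ler_pdivlMr ?invr_gt0 // invrK; nra.
Qed.

Lemma sum_const_seq (T : Type) (F : seq T) (d : R) : \sum_(b <- F) d = d *+ size F.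
Proof. by elim: F => [|x F IH]; rewrite ?big_nil ?big_cons ?IH ?mulrS. Qed.

End Num5.
Section Main.
Variables (R : realType) (X Y : banachLattice R).

Lemma XLn_mono N N' (h : (N' <= N)%N) (v : nat -> R) : (exists x, @Bn R X N x) ->
  XLn X (fun k : 'I_N' => v k) <= XLn X (fun k : 'I_N => v k).
Proof.
move=> ne; apply: lb_le_inf; first exact: XLn_ne.
move=> y0 [F hF <-].
pose G := map (fun b (j : 'I_N') => b (widen_ord h j)) F.
have hG : decomp (fun k : 'I_N' => v k) G.
  by move=> j; rewrite big_map; apply: (hF (widen_ord h j)).
apply: le_trans (@XLn_lb R X _ _ _ hG) _; rewrite big_map; apply: ler_sum => b _.
exact: Phi_mono.
Qed.

Lemma dsupp n (z : 'I_n -> nat -> R)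
  (zd : forall i j, i != j -> forall k, Num.min `|z i k| `|z j k| = 0) i j k :
  i != j -> z i k != 0 -> z j k = 0.
Proof.
move=> ij hz; have := zd i j ij k.
rewrite minEle; case: ifP => _ /eqP; rewrite normr_eq0 ?(negbTE hz) //.
by move/eqP.
Qed.

Lemma gsum n (z : 'I_n -> nat -> R)
  (zd : forall i j, i != j -> forall k, Num.min `|z i k| `|z j k| = 0) k (v : R) :
  \sum_(i < n) (if z i k != 0 then v else 0) =
  if [exists i, z i k != 0] then v else 0.
Proof.
case: (boolP [exists i, z i k != 0]) => [/existsP [i0 hi0] | /existsPn hn].
  rewrite (bigD1 i0) //= hi0 big1 ?addr0 // => j ji0.
  by rewrite (dsupp zd (k:=k) (_ : i0 != j) hi0) ?eqxx // eq_sym.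
by apply: big1 => j _; have := hn j; rewrite negbK => /eqP ->; rewrite eqxx.
Qed.

End Main.
Section Key.
Variables (R : realType) (X Y : banachLattice R).

Lemma keyK s q D n (y : 'I_n.+1 -> Y) (c : 'I_n.+1 -> R) :
  (1 <= s)%E -> (1 <= q)%E -> 0 <= D -> rel_decomp_const X Y s D -> flr_in_XL X q ->
  pairwise_disjoint y -> (forall i, 0 < c i) ->
  `|\sum_(i < n.+1) y i| <= D * lnorm s (fun i => `|y i| / c i) * lnorm q c.
Proof.
move=> s1 q1 D0 hD hflr dy c0.
have Ls0 : 0 <= lnorm s (fun i => `|y i| / c i) by exact: lnorm_ge0.
have cLq : forall i, c i <= lnorm q c.
  move=> i; have := @lnorm_le R q _ (fun j => if j == i then c i else 0) c q1.
  rewrite lnorm_onehot // gtr0_norm //; apply => j.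
  by case: eqP => [->|_]; rewrite ?normr0 ?normr_ge0.
have Lq0 : 0 < lnorm q c by apply: lt_le_trans (c0 ord0) (cLq ord0).
set Ls := lnorm s _ in Ls0 *; set Lq := lnorm q c in cLq Lq0 *.
have K0 : 0 <= 6 * (D * Ls * Lq) by rewrite !mulr_ge0 // ltW.
apply: (closureK K0) => e e0 e2.
have [z [zX zd zb]] := hflr n.+1 e e0.
pose a := fun k => \sum_(i < n.+1) c i * z i k.
have hup : (XLnorm X a <= ((1 + e) * Lq)%:E)%E by have [_ h] := zb c.
have hlow : forall i, ((c i)%:E <= XLnorm X (fun k => (c i * z i k)%R))%E.
  move=> i; pose ei := fun j : 'I_n.+1 => if j == i then c i else 0.
  have h := (zb ei).1.
  have e1 : lnorm q ei = c i by rewrite lnorm_onehot // gtr0_norm.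
  have e2' : (fun k => \sum_(j < n.+1) ei j * z j k) = (fun k => c i * z i k).
    apply: funext => k; rewrite (bigD1 i) //= /ei eqxx big1 ?addr0 //.
    by move=> j /negbTE ->; rewrite mul0r.
  by move: h; rewrite e1 e2'.
have hN : forall i, exists N, (1 - e) * c i < XLn X (fun k : 'I_N => c i * z i k).
  move=> i; apply: (@XLnorm_gt R X (fun k => c i * z i k)); apply: lt_le_trans (hlow i); rewrite lte_fin.
  by have := c0 i; nra.
have [Nf hNf] := @choice _ _ (fun i N => (1 - e) * c i < XLn X (fun k : 'I_N => c i * z i k)) hN.
have cpos : (0 < #|'I_n.+1|)%N by rewrite card_ord.
have [istar Hmax] := bigop.eq_bigmax Nf cpos.
set N := Nf istar in Hmax.
have hNle : forall i, (Nf i <= N)%N by move=> i; rewrite -Hmax leq_bigmax.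
have neN : exists x, @Bn R X N x.
  apply: contrapT => nx; have h1 := hNf istar; rewrite -/N in h1.
  rewrite XLn_empty // in h1.
  have h2 : 0 < (1 - e) * c istar by have := c0 istar; nra.
  by have := lt_trans h2 h1; rewrite ltxx.
have hblock : forall i, (1 - e) * c i < XLn X (fun k : 'I_N => c i * z i k).
  move=> i; apply: lt_le_trans (hNf i) _.
  exact: (XLn_mono (hNle i) (fun k => c i * z i k) neN).
have hupN : XLn X (fun k : 'I_N => a k) <= (1 + e) * Lq.
  have h := @XLnorm_ub R X a N; rewrite -lee_fin; exact: (le_trans h hup).
have eLq0 : 0 < e * Lq / 2 by rewrite divr_gt0 // mulr_gt0.
have [F [hF hFs]] := @XLn_approx R X N (fun k => a k) (e * Lq / 2) eLq0.
set d := e * Lq / 2 / (size F).+1%:R.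
have d0 : 0 < d by rewrite /d divr_gt0 // ltr0n.
have hx : forall b : 'I_N -> R,
    exists x, @Bn R X N x /\ `|\sum_(j < N) b j *: x j| < Phi X b + d.
  by move=> b; apply: Phi_approx.
have [xf hxf] := @choice _ _ (fun b x => @Bn R X N x /\ `|\sum_(j < N) b j *: x j| < Phi X b + d) hx.
pose g i (b : 'I_N -> R) := fun j : 'I_N => if z i j != 0 then b j else 0.
pose xb b i := \sum_(j < N) g i b j *: xf b j.
pose m b i := `|xb b i|.
pose M i := \sum_(b <- F) m b i.
have hM : forall i, (1 - e) * c i < M i.
  move=> i; apply: lt_le_trans (hblock i) _.
  have hdec : decomp (fun k : 'I_N => c i * z i k) (map (g i) F).
    move=> k; rewrite big_map /g.
    case: (eqVneq (z i k) 0) => [->|hz].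
      by rewrite mulr0; apply: big1.
    rewrite (eq_bigr (fun b => b k)) //.
    rewrite hF /a (bigD1 i) //= big1 ?addr0 // => j ji.
    by rewrite (dsupp zd (k:=nat_of_ord k) (_ : i != j) hz) ?mulr0 // eq_sym.
  apply: le_trans (@XLn_lb R X _ _ _ hdec) _; rewrite big_map; apply: ler_sum => b _.
  exact: (Phi_lb (g i b) (hxf b).1).
have M0 : forall i, 0 < M i.
  by move=> i; apply: le_lt_trans (hM i); have := c0 i; nra.
have hdx : forall b, pairwise_disjoint (xb b).
  move=> b i i' ii'; rewrite /xb; apply: dj_sum => j _; apply: dj_sym.
  apply: dj_sum => j' _; apply: dj_sym.
  case: (eqVneq j j') => [<-|jj'].
    case: (eqVneq (z i j) 0) => [hz|hz].
      by rewrite /g /= hz eqxx scale0r; apply: dj_sym; apply: dj0.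
    by rewrite /g /= (dsupp zd ii' hz) eqxx scale0r; apply: dj0.
  apply: djZ; apply: dj_sym; apply: djZ.
  by apply/djE; apply: (hxf b).1.2.
have hsx : forall b, `|\sum_(i < n.+1) xb b i| <= `|\sum_(j < N) b j *: xf b j|.
  move=> b; rewrite /xb exchange_big /=.
  rewrite (eq_bigr (fun j : 'I_N => if [exists i, z i j != 0] then b j *: xf b j else 0)); last first.
    move=> j _; rewrite -scaler_suml /g /= gsum //.
    by case: ifP => _; rewrite ?scale0r.
  rewrite -big_mkcond /=.
  apply: (@norm_sub_sum R X N (fun j => b j *: xf b j) (fun j => [exists i, z i j != 0])).
  move=> j j' jj'; apply: djZ; apply: dj_sym; apply: djZ; apply: dj_sym.
  by apply/djE; apply: (hxf b).1.2.
pose th b i := m b i / M i.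
have hsy : \sum_(i < n.+1) y i = \sum_(b <- F) \sum_(i < n.+1) th b i *: y i.
  rewrite exchange_big /=; apply: eq_bigr => i _; rewrite -scaler_suml.
  have -> : \sum_(b <- F) th b i = 1.
    by rewrite /th -mulr_suml -/(M i) (mulfV (lt0r_neq0 (M0 i))).
  by rewrite scale1r.
have each : forall b, `|\sum_(i < n.+1) th b i *: y i| <=
    D * ((1 - e)^-1 * Ls) * (Phi X b + d).
  move=> b.
  have hG := @decompG R X Y s D n.+1 (xb b) (fun i => th b i *: y i) s1 D0 hD (hdx b).
  apply: le_trans (hG _ _) _.
  - by move=> i i' ii'; apply: djZ; apply: dj_sym; apply: djZ; apply: dj_sym; apply/djE; apply: dy.
  - by move=> i hx0; rewrite /th /m hx0 normr0 mul0r scale0r.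
  apply: ler_pM.
  - by apply: mulr_ge0 => //; exact: lnorm_ge0.
  - exact: normr_ge0.
  - apply: ler_wpM2l => //.
    have e1 : 0 <= (1 - e)^-1 by rewrite invr_ge0; lra.
    rewrite /Ls -lnorm_scale //; apply: lnorm_le => // i.
    have hm0 : 0 <= m b i by exact: normr_ge0.
    rewrite ger0_norm; last by apply: divr_ge0; exact: normr_ge0.
    rewrite ger0_norm; last by apply: mulr_ge0 => //; apply: divr_ge0 => //; exact: ltW.
    rewrite -/(m b i); case: (eqVneq (m b i) 0) => [->|mn0]; first by rewrite invr0 mulr0; apply: mulr_ge0 => //; apply: divr_ge0 => //; exact: ltW.
    rewrite normrZ ger0_norm; last by apply: divr_ge0 => //; exact: ltW.
    have -> : m b i / M i * `|y i| / m b i = `|y i| / M i.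
      by have hM0 := lt0r_neq0 (M0 i); field; rewrite hM0 mn0.
    rewrite [X in _ <= X]mulrCA -invfM; apply: ler_wpM2l => //.
    rewrite lef_pV2 ?posrE //; [exact: ltW | by have := c0 i; nra].
  - apply: le_trans (hsx b) _; exact: ltW (hxf b).2.
rewrite hsy; apply: le_trans (ler_norm_sum _ _ _) _.
apply: le_trans (ler_sum _ (fun b _ => each b)) _.
rewrite -mulr_sumr big_split /= sum_const_seq.
have hd : d *+ size F <= e * Lq / 2.
  rewrite /d -mulr_natr mulrAC ler_pdivrMr ?ltr0n // ler_pM2l //.
  by rewrite ler_nat.
have hsum : \sum_(b <- F) Phi X b + d *+ size F <= (1 + 2 * e) * Lq.
  have := lerD (ltW hFs) hd; move/le_trans; apply.
  by have := hupN; lra.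
have DL0 : 0 <= D * ((1 - e)^-1 * Ls).
  by apply: mulr_ge0 => //; apply: mulr_ge0 => //; rewrite invr_ge0; lra.
apply: le_trans (ler_wpM2l DL0 hsum) _.
have -> : D * ((1 - e)^-1 * Ls) * ((1 + 2 * e) * Lq) =
    (D * Ls * Lq) * ((1 - e)^-1 * (1 + 2 * e)) by ring.
have -> : D * Ls * Lq + e * (6 * (D * Ls * Lq)) = (D * Ls * Lq) * (1 + 6 * e) by ring.
apply: ler_wpM2l; first by rewrite !mulr_ge0 // ltW.
exact: num_bound.
Qed.


End Key.
Section Holder.
Variable R : realType.

Lemma recip_ge0 (s : \bar R) : (1 <= s)%E -> 0 <= recip s.
Proof.
case: s => [t| |] s1; last by have := one_leNy s1.
  by rewrite /recip invr_ge0; move: s1; rewrite lee_fin => /(le_trans ler01).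
by rewrite /recip.
Qed.

Lemma recip_le1 (s : \bar R) : (1 <= s)%E -> recip s <= 1.
Proof.
case: s => [t| |] s1; last by have := one_leNy s1.
  by rewrite /recip invf_le1 //; move: s1; rewrite lee_fin // => /(lt_le_trans ltr01).
by rewrite /recip ler01.
Qed.

Lemma lnorm_pow_bound s n (u m : 'I_n -> R) rho : (1 <= s)%E -> 0 < rho ->
  (forall i, 0 <= m i) -> (forall i, 0 <= u i <= m i `^ (rho * recip s)) ->
  lnorm s u <= (\sum_(i < n) m i `^ rho) `^ recip s.
Proof.
move=> s1 r0 m0 hu; case: s s1 hu => [t| |] s1 hu; last by have := one_leNy s1.
  rewrite lnorm_finE /recip; move: s1; rewrite lee_fin => t1.
  have t0 : 0 < t by apply: lt_le_trans t1.
  apply: powR_le; [by rewrite invr_ge0 ltW | by apply: sumr_ge0 => i _; exact: powR_ge0 |].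
  apply: ler_sum => i _; have /andP[u0 um] := hu i; rewrite ger0_norm //.
  have -> : m i `^ rho = (m i `^ (rho * t^-1)) `^ t.
    by rewrite -powRrM -mulrA mulVf ?mulr1 // gt_eqF.
  by apply: powR_le => //; exact: ltW.
rewrite lnorm_infE /recip powRr0; apply: bigmax_le => // i.
by have /andP[u0 um] := hu i; rewrite ger0_norm //; move: um; rewrite mulr0 powRr0.
Qed.

Lemma eta_lim n (b : 'I_n -> R) rho S D : 0 < rho -> 0 <= D -> (forall i, 0 <= b i) ->
  (forall eta, 0 < eta ->
     S <= D * (\sum_(i < n) (Num.max (b i) eta) `^ rho) `^ rho^-1) ->
  S <= D * (\sum_(i < n) b i `^ rho) `^ rho^-1.
Proof.
move=> r0 D0 b0 h.
set A := \sum_(i < n) b i `^ rho.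
have A0 : 0 <= A by apply: sumr_ge0 => i _; exact: powR_ge0.
have r0' : 0 <= rho^-1 by rewrite invr_ge0 ltW.
have h' : forall eta, 0 < eta -> S <= D * (A + n%:R * eta `^ rho) `^ rho^-1.
  move=> eta e0; apply: le_trans (h eta e0) _; apply: ler_wpM2l => //.
  apply: powR_le => //; first by apply: sumr_ge0 => i _; exact: powR_ge0.
  have -> : n%:R * eta `^ rho = \sum_(i < n) eta `^ rho.
    by rewrite sumr_const card_ord mulr_natl.
  rewrite /A -big_split /=.
  apply: ler_sum => i _; rewrite maxEle; case: ifP => _.
    by rewrite lerDr powR_ge0.
  by rewrite lerDl powR_ge0.
case: (eqVneq D 0) => [D00|Dn0].
  by have := h' 1 ltr01; rewrite D00 !mul0r.
have Dp : 0 < D by rewrite lt_neqAle eq_sym Dn0.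
have [S0|S0] := leP S 0.
  by apply: le_trans S0 _; apply: mulr_ge0 => //; exact: powR_ge0.
set T := S / D.
have T0 : 0 <= T by rewrite divr_ge0 // ltW.
have hT : T `^ rho <= A.
  apply/ler_addgt0Pr => eps eps0.
  pose eta := (eps / (n.+1)%:R) `^ rho^-1.
  have eta0 : 0 < eta by apply: powR_gt0; rewrite divr_gt0 // ltr0n.
  have := h' eta eta0; rewrite -ler_pdivrMl // mulrC -/T => hT.
  have hAe : 0 <= A + n%:R * eta `^ rho by apply: addr_ge0 => //; rewrite mulr_ge0 // powR_ge0.
  apply: le_trans (powR_le (ltW r0) T0 hT) _.
  rewrite powRVK ?gt_eqF // lerD2l /eta powRVK ?gt_eqF //; last by rewrite divr_ge0 // ltW.
  rewrite mulrCA ger_pMr // ler_pdivrMr ?ltr0n // mul1r ler_nat //.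
have : T <= A `^ rho^-1.
  rewrite -(@powRK _ T rho T0 (lt0r_neq0 r0)); apply: powR_le => //; exact: powR_ge0.
move=> hT2; have := ler_wpM2l (ltW Dp) hT2.
by rewrite /T (mulrC D (S / D)) divfK // gt_eqF.
Qed.

End Holder.
Section Final.
Variables (R : realType) (X Y : banachLattice R).

Lemma upperK s q p D : (1 <= s)%E -> (1 <= q)%E -> (1 <= p)%E ->
  recip q + recip s <= recip p -> 0 <= D ->
  rel_decomp_const X Y s D -> flr_in_XL X q -> upper_est_const Y p D.
Proof.
move=> s1 q1 p1 hrec D0 hD hflr n y dy.
case: n y dy => [|n] y dy.
  by rewrite big_ord0 normr0 mulr_ge0 // lnorm_ge0.
case: q q1 hflr hrec => [r| |] q1 hflr hrec; last by have := one_leNy q1.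
  move: (q1); rewrite lee_fin => r1.
  have r0 : 0 < r by apply: lt_le_trans r1.
  have rs0 : 0 < r^-1 + recip s by rewrite ltr_wpDr ?recip_ge0 // invr_gt0.
  set rho := (r^-1 + recip s)^-1.
  have rho0 : 0 < rho by rewrite invr_gt0.
  have hrho : rho * (r^-1 + recip s) = 1 by rewrite mulVf // gt_eqF.
  have hexp : 1 - rho / r = rho * recip s.
    by rewrite -{1}hrho mulrDr addrAC subrr add0r.
  have key : `|\sum_(i < n.+1) y i| <= D * (\sum_(i < n.+1) `|y i| `^ rho) `^ rho^-1.
    apply: (@eta_lim R n.+1 (fun i => `|y i|) rho `|\sum_(i < n.+1) y i| D rho0 D0 (fun i => normr_ge0 (y i))) => eta eta0.
    pose mm i := Num.max `|y i| eta.
    have mm0 : forall i, 0 < mm i.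
      move=> i; apply: lt_le_trans eta0 _; rewrite /mm maxEle; case: ifP => // /negbT.
      by rewrite -ltNge => /ltW.
    pose c i := mm i `^ (rho / r).
    have c0 : forall i, 0 < c i by move=> i; apply: powR_gt0.
    have hK := @keyK R X Y s r%:E D n y c s1 q1 D0 hD hflr dy c0.
    set T := \sum_(i < n.+1) mm i `^ rho.
    have T0 : 0 <= T by apply: sumr_ge0 => i _; exact: powR_ge0.
    have h1 : lnorm s (fun i => `|y i| / c i) <= T `^ recip s.
      apply: lnorm_pow_bound => // [i|i]; first exact: ltW.
      apply/andP; split; first by apply: divr_ge0 => //; exact: ltW.
      apply: (@le_trans _ _ (mm i / c i)).
        apply: ler_wpM2r; first by rewrite invr_ge0 ltW.
        by rewrite /mm maxEle; case: ifP => //; rewrite ltW // ltNge => ->.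
      rewrite -hexp powRB; last by rewrite (gt_eqF (mm0 i)) implybT.
      by rewrite powRr1 // ltW.
    have h2 : lnorm r%:E c = T `^ r^-1.
      rewrite lnorm_finE; congr (_ `^ _); apply: eq_bigr => i _.
      rewrite ger0_norm ?powR_ge0 // -powRrM divfK //; exact: lt0r_neq0.
    apply: le_trans hK _; rewrite h2 -mulrA; apply: ler_wpM2l => //.
    apply: le_trans (ler_wpM2r (powR_ge0 _ _) h1) _.
    rewrite -powRD; last by rewrite addrC gt_eqF.
    by rewrite /rho invrK addrC.
  apply: le_trans key _; apply: ler_wpM2l => //.
  have rho1 : (1 <= rho%:E)%E.
    rewrite lee_fin -[rho]invrK invf_ge1 ?invr_gt0 //.
    by rewrite /rho invrK; apply: le_trans hrec (recip_le1 p1).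
  have hr : recip rho%:E <= recip p by rewrite [recip rho%:E]/recip /rho invrK.
  have := @lnorm_exp_mono R p rho%:E n.+1 (fun i => `|y i|) p1 rho1 hr.
  rewrite lnorm_finE (eq_bigr (fun i => `|y i| `^ rho)) //.
  by move=> i _; rewrite normr_id.
have hK := @keyK R X Y s +oo%E D n y (fun _ => 1) s1 q1 D0 hD hflr dy (fun _ => ltr01).
have e1 : lnorm +oo%E (fun _ : 'I_n.+1 => (1 : R)) = 1.
  rewrite lnorm_infE; apply: le_anti; apply/andP; split.
    by apply: bigmax_le => // i; rewrite normr1.
  by have := bigmax_ub (fun _ : 'I_n.+1 => `|1 : R|) ord0; rewrite normr1.
move: hK; rewrite e1 mulr1 (_ : (fun i => `|y i| / 1) = (fun i => `|y i|)); last first.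
  by apply: funext => i; rewrite divr1.
move/le_trans; apply; apply: ler_wpM2l => //.
apply: lnorm_exp_mono => //; by move: hrec; rewrite /recip add0r.
Qed.

Lemma nz_elem (Z : banachLattice R) : infinite_dim Z -> exists w : Z, w != 0.
Proof.
move=> /(_ 1%N) [v hv]; exists (v ord0); apply/eqP => h0.
have := hv (fun _ => 1) _ ord0; rewrite big_ord1 h0 scaler0 => /(_ erefl) /eqP.
by rewrite oner_eq0.
Qed.

Lemma D_ge0 s D : infinite_dim X -> infinite_dim Y ->
  rel_decomp_const X Y s D -> 0 <= D.
Proof.
move=> iX iY hD; have [v v0] := nz_elem iX; have [w w0] := nz_elem iY.
have := hD 1%N (fun _ => v) (fun _ => w) (fun _ => v0) (fun _ => w0).
rewrite !big_ord1 => /(_ _ _).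
have pd : forall (Z : banachLattice R) (f : 'I_1 -> Z), pairwise_disjoint f.
  by move=> Z f i j; rewrite (ord1 i) (ord1 j) eqxx.
move=> /(_ (pd _ _) (pd _ _)) h.
rewrite leNgt; apply/negP => D0.
have : D * lnorm s (fun _ : 'I_1 => `|w| / `|v|) * `|v| <= 0.
  by rewrite -mulrA nmulr_rle0 // mulr_ge0 // lnorm_ge0.
move/(le_trans h); rewrite normr_le0; exact/negP.
Qed.

Lemma M_ge0 p M : infinite_dim Y -> upper_est_const Y p M -> 0 <= M.
Proof.
move=> iY hM; have [w w0] := nz_elem iY.
have pd : pairwise_disjoint (fun _ : 'I_1 => w).
  by move=> i j; rewrite (ord1 i) (ord1 j) eqxx.
have := hM 1%N (fun _ => w) pd; rewrite big_ord1 => h.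
rewrite leNgt; apply/negP => M0.
have : M * lnorm p (fun _ : 'I_1 => `|w|) <= 0.
  by rewrite nmulr_rle0 // lnorm_ge0.
move/(le_trans h); rewrite normr_le0; exact/negP.
Qed.

End Final.

Unset Implicit Arguments.
Unset Strict Implicit.

Theorem mainTheorem12 (R : realType) (X Y : banachLattice R) (s q : \bar R) :
  infinite_dim X -> infinite_dim Y ->
  (1 <= s)%E -> rel_decomposable X Y s ->
  (1 <= q)%E -> flr_in_XL X q -> recip q + recip s <= 1 ->
  forall p : \bar R, (1 <= p)%E -> recip q + recip s <= recip p ->
    upper_estimate Y p /\ Mp Y p <= Ds X Y s.
Proof.
move=> iX iY s1 [D0 hD0] q1 hflr _ p p1 hrec.
have up : forall D, rel_decomp_const X Y s D -> upper_est_const Y p D.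
  move=> D hD; apply: (upperK s1 q1 p1 hrec _ hD hflr).
  exact: (D_ge0 iX iY hD).
split; first by exists D0; apply: up.
apply: lb_le_inf; first by exists D0.
move=> D hD; apply: ge_inf; last exact: up.
by exists 0 => M hM; exact: (M_ge0 iY hM).
Qed.
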